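(* Let $X$ be a real Banach space with the Ball Dentable Property ($BDP$). Then for every separable closed subspace $Y$ of $X$ there exists a separable closed subspace $Z$ of $X$ with $Y\subseteq Z$ such that $Z$ has $BDP$.
   Context: For a real Banach space $X$, $B_X$ denotes its closed unit ball and $X^*$ its dual. A slice of a bounded set $C\subseteq X$ is a set $S(C,x^*,\alpha)=\{x\in C: x^*(x)>\sup x^*(C)-\alpha\}$ with $x^*\in X^*$, $\|x^*\|=1$, $\alpha>0$. $X$ has the Ball Dentable Property ($BDP$) if for every $\varepsilon>0$ there is a slice of $B_X$ of diameter less than $\varepsilon$. *)

(* Defs.v *)
From HB Require Import structures.
From mathcomp Require Import all_boot all_order all_algebra.
From mathcomp Require Import all_classical all_reals all_analysis.
Set Implicit Arguments. Unset Strict Implicit. Unset Printing Implicit Defensive.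
Import Order.TTheory GRing.Theory Num.Theory.
Import numFieldNormedType.Exports.
Local Open Scope classical_set_scope.
Local Open Scope ring_scope.

Section BDP.
Variables (R : realType) (X : normedModType R).

Definition linear_subspace (S : set X) : Prop :=
  S 0 /\ (forall x y, S x -> S y -> S (x + y)) /\
  (forall (a : R) x, S x -> S (a *: x)).

Definition closed_subspace (S : set X) : Prop :=
  linear_subspace S /\ closed S.

Definition separable_set (S : set X) : Prop :=
  exists D : set X, [/\ countable D, D `<=` S & S `<=` closure D].

Definition unit_ball_of (S : set X) : set X :=
  [set x | S x /\ `|x| <= 1].

Definition dual_elt (S : set X) (f : X -> R) : Prop :=
  [/\ (forall x y, S x -> S y -> f (x + y) = f x + f y),
      (forall (a : R) x, S x -> f (a *: x) = a * f x) &
      {within S, continuous f}].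

Definition dual_norm (S : set X) (f : X -> R) : \bar R :=
  ereal_sup [set (`|f x|)%:E | x in unit_ball_of S].

Definition slice (C : set X) (f : X -> R) (alpha : R) : set X :=
  [set x | C x /\ sup (f @` C) - alpha < f x].

Definition diam (A : set X) : \bar R :=
  ereal_sup [set (`|x - y|)%:E | x in A & y in A].

Definition BDP_sub (S : set X) : Prop :=
  forall eps : R, 0 < eps ->
    exists (f : X -> R) (alpha : R),
      [/\ dual_elt S f, dual_norm S f = 1%:E, 0 < alpha &
          (diam (slice (unit_ball_of S) f alpha) < eps%:E)%E].

Definition BDP : Prop := BDP_sub setT.

End BDP.

(* Main.v *)
Require Import Defs.
From HB Require Import structures.
From mathcomp Require Import all_boot all_order all_algebra.
From mathcomp Require Import all_classical all_reals all_analysis.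
From mathcomp Require Import lra.
Import Order.TTheory GRing.Theory Num.Theory.
Import numFieldNormedType.Exports.
Local Open Scope classical_set_scope.
Local Open Scope ring_scope.

Section Aux.
Variables (R : realType) (X : normedModType R).

Definition hs (S : set X) (h : X -> R) := [set h x | x in unit_ball_of S].

Lemma ball_neg (S : set X) x : linear_subspace S -> unit_ball_of S x -> unit_ball_of S (- x).
Proof.
move=> [_ [_ HZ]] [Sx nx]; split; last by rewrite normrN.
by rewrite -scaleN1r; apply: HZ.
Qed.

Lemma ball0 (S : set X) : linear_subspace S -> unit_ball_of S 0.
Proof. by move=> [S0 _]; split => //; rewrite normr0. Qed.

Lemma hneg (S : set X) (h : X -> R) x : (forall (a : R) x, S x -> h (a *: x) = a * h x) ->
  S x -> h (- x) = - h x.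
Proof. by move=> Hh Sx; rewrite -scaleN1r Hh // mulN1r. Qed.

Lemma has_sup_hs (S : set X) h M : linear_subspace S ->
  (forall x, unit_ball_of S x -> `|h x| <= M) -> has_sup (hs S h).
Proof.
move=> LS HM; split; first by exists (h 0), 0 => //; exact: ball0.
by exists M => _ [x Bx <-]; apply: le_trans (HM x Bx); apply: ler_norm.
Qed.

Lemma dual_normE (S : set X) (h : X -> R) M : linear_subspace S ->
  (forall (a : R) x, S x -> h (a *: x) = a * h x) ->
  (forall x, unit_ball_of S x -> `|h x| <= M) ->
  dual_norm S h = (sup (hs S h))%:E.
Proof.
move=> LS Hh HM.
have hsup := @has_sup_hs S h M LS HM.
rewrite /dual_norm.
have -> : [set (`|h x|)%:E | x in unit_ball_of S] =
          [set x%:E | x in [set `|h x| | x in unit_ball_of S]].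
  by rewrite image_comp.
have ne : [set `|h x| | x in unit_ball_of S] !=set0.
  by exists `|h 0|, 0 => //; exact: ball0.
rewrite ereal_sup_EFin //; last first.
  by exists M => _ [x Bx <-]; exact: HM.
congr (_%:E); apply: le_anti; apply/andP; split.
  apply: ge_sup => // _ [x Bx <-].
  have [hx0|hx0] := leP 0 (h x).
    rewrite ger0_norm //; apply: sup_upper_bound => //; by exists x.
  rewrite ltr0_norm // -(@hneg S h x Hh (proj1 Bx)).
  apply: sup_upper_bound => //; exists (- x) => //; exact: (@ball_neg S x LS).
apply: ge_sup; first by case: hsup.
move=> _ [x Bx <-]; apply: le_trans (ler_norm _) _.
apply: sup_upper_bound; last by exists x.
by split => //; exists M => _ [y By <-]; exact: HM.
Qed.


Lemma fbound (f : X -> R) : dual_norm setT f = 1%:E ->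
  forall x, unit_ball_of setT x -> `|f x| <= 1.
Proof.
move=> Hn x Bx; rewrite -lee_fin -Hn; apply: ereal_sup_ubound; by exists x.
Qed.

Lemma fsup1 (f : X -> R) : dual_elt setT f -> dual_norm setT f = 1%:E ->
  sup (hs setT f) = 1.
Proof.
move=> [_ Hs _] Hn.
have LT : linear_subspace (@setT X) by [].
have := @dual_normE setT f 1 LT (fun a x _ => Hs a x I) (@fbound f Hn).
by rewrite Hn => -[->].
Qed.

Lemma restrict (S : set X) (f : X -> R) (alpha : R) x :
  linear_subspace S -> dual_elt setT f -> dual_norm setT f = 1%:E -> 0 < alpha ->
  unit_ball_of S x -> 1 - Num.min alpha 1 / 2 < f x ->
  exists (g : X -> R) (beta : R),
    [/\ dual_elt S g, dual_norm S g = 1%:E, 0 < beta &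
        slice (unit_ball_of S) g beta `<=` slice (unit_ball_of setT) f alpha].
Proof.
move=> LS df nf a0 Bx fx.
have [gam gdef] : exists gam : R, gam = Num.min alpha 1 / 2 by eexists.
rewrite -gdef in fx.
have g0 : 0 < gam by rewrite gdef divr_gt0 // lt_min a0 ltr01.
have g1 : gam <= 1 / 2 by rewrite gdef ler_pM2r ?invr_gt0 // ge_min lexx orbT.
have g2 : gam * 2 <= alpha by rewrite gdef mulfVK ?pnatr_eq0 // ge_min lexx.
clear gdef.
have [fadd fsc fc] := df.
have fb := @fbound f nf.
have BSX : forall y, unit_ball_of S y -> unit_ball_of setT y by move=> y [_ ?].
have hsS := @has_sup_hs S f 1 LS (fun y By => fb y (BSX y By)).
set M := sup (hs S f).
have Mx : f x <= M by apply: sup_upper_bound => //; exists x.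
have M0 : 0 < M by apply: lt_le_trans Mx; apply: le_lt_trans fx; lra.
set g := fun y => f y / M.
have gsc : forall (a : R) y, S y -> g (a *: y) = a * g y.
  by move=> a y _; rewrite /g fsc // mulrA.
have gb : forall y, unit_ball_of S y -> `|g y| <= M^-1.
  move=> y By; rewrite /g normrM normfV (gtr0_norm M0) -[leRHS]mul1r.
  by rewrite ler_pM2r ?invr_gt0 //; apply: fb; apply: BSX.
have hsg := @has_sup_hs S g M^-1 LS gb.
have sg1 : sup (hs S g) = 1.
  apply: le_anti; apply/andP; split.
    apply: ge_sup; first by case: hsg.
    move=> _ [y By <-]; rewrite /g ler_pdivrMr // mul1r.
    by apply: sup_upper_bound => //; exists y.
  rewrite leNgt; apply/negP => hlt.
  have hsg' := hsg.
  have e0 : 0 < M * (1 - sup (hs S g)) by rewrite mulr_gt0 // subr_gt0.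
  have [_ [y By <-] hy] := sup_adherent e0 hsS.
  have : g y <= sup (hs S g) by apply: sup_upper_bound => //; exists y.
  rewrite /g ler_pdivrMr //; move: hy; rewrite -/M; nra.
exists g, gam; split => //.
- split.
  + by move=> y z _ _; rewrite /g fadd // mulrDl.
  + by move=> a y _; rewrite /g fsc // mulrA.
  + apply: continuous_subspaceT => y; apply: cvgMr_tmp.
    by have := (proj2 (continuous_subspace_setT f)) fc y.
- by rewrite (@dual_normE S g M^-1 LS gsc gb) sg1.
- move=> y [By hy]; split; first exact: BSX.
  rewrite (@fsup1 f df nf).
  move: hy; rewrite -/(hs S g) sg1 /g ltr_pdivlMr //.
  move=> hy.
  have : (1 - gam) * (1 - gam) <= M * (1 - gam) by rewrite ler_pM2r; lra.
  nra.
Qed.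


Lemma closureP (A : set X) x :
  closure A x <-> forall e : R, 0 < e -> exists y, A y /\ `|x - y| < e.
Proof.
split.
  move=> cx e e0; have [y [Ay bxy]] := cx _ (nbhsx_ballx x e e0).
  by exists y; split => //; move: bxy; rewrite -ball_normE.
move=> H B /nbhs_ballP [e /= e0 sB].
have [y [Ay hy]] := H e e0; exists y; split => //; apply: sB.
by rewrite -ball_normE.
Qed.

Lemma closure_add (A : set X) x y : (forall a b, A a -> A b -> A (a + b)) ->
  closure A x -> closure A y -> closure A (x + y).
Proof.
move=> HA /closureP cx /closureP cy; apply/closureP => e e0.
have e20 : 0 < e / 2 by rewrite divr_gt0.
have [a [Aa ha]] := cx _ e20; have [b [Ab hb]] := cy _ e20.
exists (a + b); split; first exact: HA.
have -> : x + y - (a + b) = (x - a) + (y - b).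
  by rewrite opprD addrACA.
apply: le_lt_trans (ler_normD _ _) _.
by rewrite [e]splitr ltrD.
Qed.

Lemma rat_approx (c e : R) : 0 < e -> exists q : rat, `|c - ratr q| < e.
Proof.
move=> e0; have := @dense_rat R (ball c e).
case.
- by exists c; apply: ballxx.
- exact: ball_open.
move=> y [bq [q _ qy]]; exists q; rewrite qy; by move: bq; rewrite -ball_normE.
Qed.

Lemma closure_scale (A : set X) x (c : R) :
  (forall (q : rat) a, A a -> A (ratr q *: a)) ->
  closure A x -> closure A (c *: x).
Proof.
move=> HA /closureP cx; apply/closureP => e e0.
have e20 : 0 < e / 2 by rewrite divr_gt0.
have n1 : 0 < `|x| + 1 by rewrite ltr_wpDl.
have [q hq] := @rat_approx c _ (divr_gt0 e20 n1).
have m1 : 0 < `|ratr q : R| + 1 by rewrite ltr_wpDl.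
have [a [Aa ha]] := cx _ (divr_gt0 e20 m1).
exists (ratr q *: a); split; first exact: HA.
have -> : c *: x - ratr q *: a = (c - ratr q) *: x + ratr q *: (x - a).
  by rewrite scalerBl scalerBr addrA subrK.
apply: le_lt_trans (ler_normD _ _) _.
rewrite [e]splitr; apply: ltrD; rewrite normrZ.
  apply: (@le_lt_trans _ _ (`|c - ratr q| * (`|x| + 1))).
    by rewrite ler_wpM2l // lerDl.
  by rewrite -ltr_pdivlMr.
apply: (@le_lt_trans _ _ ((`|ratr q : R| + 1) * `|x - a|)).
  by rewrite ler_wpM2r // lerDl.
by rewrite mulrC -ltr_pdivlMr.
Qed.

End Aux.

Theorem mainTheorem2 (R : realType) (X : completeNormedModType R) :
  BDP X ->
  forall Y : set X, closed_subspace Y -> separable_set Y ->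
  exists Z : set X,
    [/\ closed_subspace Z, separable_set Z, Y `<=` Z & BDP_sub Z].
Proof.
move=> bdp Y [LY cY] [DY [cDY DYY YDY]].
have LT : linear_subspace (@setT X) by [].
have step : forall n : nat, exists x : X, exists (f : X -> R) (alpha : R),
  [/\ dual_elt setT f, dual_norm setT f = 1%:E, 0 < alpha,
      (diam (slice (unit_ball_of setT) f alpha) < (n.+1%:R^-1)%:E)%E &
      unit_ball_of setT x /\ 1 - Num.min alpha 1 / 2 < f x].
  move=> n.
  have np : 0 < (n.+1%:R : R)^-1 by rewrite invr_gt0.
  have [f [alpha [df nf a0 hd]]] := bdp _ np.
  have hs1 := @fsup1 R X f df nf.
  have hsup := @has_sup_hs R X setT f 1 LT (@fbound R X f nf).
  have gpos : 0 < Num.min alpha 1 / 2 by rewrite divr_gt0 // lt_min a0 ltr01.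
  have [_ [x Bx <-] hx] := sup_adherent gpos hsup.
  exists x, f, alpha; split => //; split => //.
  by move: hx; rewrite hs1.
have [xs Hxs] := choice step.
have [g gsurj] : exists g : nat -> X, set_surj setT DY g by apply/pcard_surjP.
pose e i := if pselect (Y (g i)) then g i else 0.
pose u (p : nat + nat) := match p with inl i => e i | inr i => xs i end.
pose F (s : seq (rat * (nat + nat))) := \sum_(p <- s) ratr p.1 *: u p.2.
pose D := range F.
pose Z := \bigcap_(W in [set W : set X | [/\ closed_subspace W, Y `<=` W &
                                          forall n, W (xs n)]]) W.
have ZW : forall W, closed_subspace W -> Y `<=` W -> (forall n, W (xs n)) ->
    Z `<=` W by move=> W ? ? ? z; apply.
have LZ : linear_subspace Z.
  split; [|split].
  - by move=> W [[[W0 _] _] _ _].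
  - move=> x y Zx Zy W PW; have [[[_ [Wadd _]] _] _ _] := PW.
    by apply: Wadd; [exact: Zx | exact: Zy].
  - move=> a x Zx W PW; have [[[_ [_ Wsc]] _] _ _] := PW.
    by apply: Wsc; exact: Zx.
have cZ : closed Z.
  by apply: (@closed_bigI X (set X)) => W [[_ cW] _ _].
have YZ : Y `<=` Z by move=> y Yy W [_ YW _]; apply: YW.
have xZ : forall n, Z (xs n) by move=> n W [_ _ ?].
have uZ : forall p, Z (u p).
  case=> i /=; last exact: xZ.
  rewrite /e; destruct (pselect (Y (g i))) as [Yg|nY]; [exact: YZ Yg | exact: LZ.1].
have FZ : forall s, Z (F s).
  elim=> [|p s IH]; rewrite /F ?big_nil ?big_cons; first exact: LZ.1.
  by apply: LZ.2.1; [apply: LZ.2.2; exact: uZ | exact: IH].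
have Fcat : forall s1 s2, F (s1 ++ s2) = F s1 + F s2.
  by move=> s1 s2; rewrite /F big_cat.
have Fscale : forall q s, ratr q *: F s = F (map (fun p => (q * p.1, p.2)) s).
  move=> q s; rewrite /F big_map scaler_sumr; apply: eq_bigr => p _ /=.
  by rewrite rmorphM scalerA.
have cD : closed_subspace (closure D).
  split; last exact: closed_closure.
  split; [|split].
  - by apply: subset_closure; exists [::]; rewrite // /F big_nil.
  - move=> x y; apply: closure_add => _ _ [s1 _ <-] [s2 _ <-].
    by exists (s1 ++ s2); rewrite // Fcat.
  - move=> a x; apply: closure_scale => q _ [s _ <-].
    by exists (map (fun p => (q * p.1, p.2)) s); rewrite // Fscale.
have DYD : DY `<=` D.
  move=> d DYd; have [i _ gi] := gsurj d DYd.
  exists [:: (1%Q, inl i)] => //.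
  rewrite /F big_seq1 /= rmorph1 scale1r /e.
  destruct (pselect (Y (g i))) as [Yg|nY]; first by [].
  by exfalso; apply: nY; rewrite gi; exact: DYY.
have ZD : Z `<=` closure D.
  apply: ZW => //.
  - by move=> y Yy; apply: (closureS DYD); exact: YDY.
  - move=> n; apply: subset_closure; exists [:: (1%Q, inr n)] => //.
    by rewrite /F big_seq1 /= rmorph1 scale1r.
exists Z; split => //.
- exists D; split.
  + by apply: (sub_countable (card_image_le F setT)); exact: countableP.
  + by move=> _ [s _ <-]; exact: FZ.
  + exact: ZD.
- move=> eps e0.
  have [n hn] : exists n : nat, n.+1%:R^-1 < eps.
    have [N _ HN] := near_infty_natSinv_lt (PosNum e0).
    by exists N; apply: HN => /=.
  have [f [alpha [df nf a0 hd [Bx fx]]]] := Hxs n.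
  have BZx : unit_ball_of Z (xs n) by split; [exact: xZ | exact: Bx.2].
  have [g' [beta [dg ng b0 sl]]] :=
    @restrict R X Z f alpha (xs n) LZ df nf a0 BZx fx.
  exists g', beta; split => //.
  apply: (le_lt_trans _ (lt_trans hd _)); last by rewrite lte_fin.
  apply: ereal_sup_le => _ [a Sa [b Sb <-]].
  by exists a; [exact: sl | exists b; [exact: sl | done]].
Qed.
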